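(* Let $k,a,b$ be positive real numbers. The $k$-FL sequence $\{S^{(a,b)}_{k,n}\}_{n\ge0}$ is a geometric sequence if and only if $a^2=(k^2+4)b^2$. In particular, given a positive real number $k$, there are infinitely many pairs $(a,b)$ such that $\{S^{(a,b)}_{k,n}\}_{n\ge0}$ is a geometric sequence.
   Context: The $k$-FL sequence (for positive reals $k,a,b$) is $S^{(a,b)}_{k,0}=2b$, $S^{(a,b)}_{k,1}=bk+a$, $S^{(a,b)}_{k,n}=kS^{(a,b)}_{k,n-1}+S^{(a,b)}_{k,n-2}$. *)

(* Defs.v *)
From Stdlib Require Import Reals.
Open Scope R_scope.

(* The k-FL sequence S^{(a,b)}_{k,n}:
   S_0 = 2b, S_1 = b k + a, S_n = k S_{n-1} + S_{n-2}. *)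
Fixpoint kFL_aux (k a b : R) (n : nat) : R * R :=
  match n with
  | O => (2 * b, b * k + a)
  | S m => let p := kFL_aux k a b m in (snd p, k * snd p + fst p)
  end.

Definition kFL (k a b : R) (n : nat) : R := fst (kFL_aux k a b n).

Definition is_geometric (u : nat -> R) : Prop :=
  exists r : R, forall n : nat, u (S n) = r * u n.

(* Main.v *)
Require Import Defs.
From Stdlib Require Import Reals Lra Psatz.
Open Scope R_scope.

Lemma part1 : forall k a b : R, 0 < k -> 0 < a -> 0 < b ->
     (is_geometric (kFL k a b) <-> a ^ 2 = (k ^ 2 + 4) * b ^ 2).
Proof.
  intros k a b hk ha hb; split.
  - intros [r H]. pose proof (H 0%nat) as H1. pose proof (H 1%nat) as H2.
    unfold kFL in H1, H2; simpl in H1, H2.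
    assert (E : 2*b*(k*(b*k+a)+2*b) = (b*k+a)*(b*k+a)).
    { rewrite H2. rewrite H1 at 2. ring. }
    nra.
  - intros E. exists ((b*k+a)/(2*b)).
    set (r := (b*k+a)/(2*b)).
    assert (Hr : r*r = k*r + 1).
    { unfold r. simpl in E.
      replace ((b*k+a)/(2*b) * ((b*k+a)/(2*b)) - (k*((b*k+a)/(2*b)) + 1)) with ((a*a - b*b*k*k - 4*b*b)/(4*b*b)) by (field; lra) || idtac.
      apply Rminus_diag_uniq.
      replace ((b*k+a)/(2*b) * ((b*k+a)/(2*b)) - (k*((b*k+a)/(2*b)) + 1)) with ((a*a - b*b*k*k - 4*b*b)/(4*b*b)) by (field; lra).
      replace (a*a - b*b*k*k - 4*b*b) with 0 by nra. unfold Rdiv; ring. }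
    assert (G : forall n, snd (kFL_aux k a b n) = r * fst (kFL_aux k a b n)).
    { induction n as [|n IH]; simpl.
      - unfold r; field; lra.
      - rewrite IH. replace (r * (r * fst (kFL_aux k a b n))) with ((r*r) * fst (kFL_aux k a b n)) by ring.
        rewrite Hr. ring. }
    intros n. unfold kFL. simpl. apply G.
Qed.

Theorem corollary4p20 :
  (forall k a b : R, 0 < k -> 0 < a -> 0 < b ->
     (is_geometric (kFL k a b) <-> a ^ 2 = (k ^ 2 + 4) * b ^ 2))
  /\
  (forall k : R, 0 < k ->
     exists f : nat -> R * R,
       (forall m n : nat, f m = f n -> m = n) /\
       (forall n : nat, 0 < fst (f n) /\ 0 < snd (f n) /\
          is_geometric (kFL k (fst (f n)) (snd (f n))))).
Proof.
  split; [exact part1|].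
  intros k hk.
  exists (fun n => (sqrt (k^2+4) * (INR n + 1), INR n + 1)).
  split.
  - intros m n H. apply (f_equal snd) in H. simpl in H. apply INR_eq. lra.
  - intros n. cbn [fst snd].
    pose proof (pos_INR n).
    assert (hs : 0 < sqrt (k^2+4)) by (apply sqrt_lt_R0; nra).
    split; [apply Rmult_lt_0_compat; lra|]. split; [lra|].
    apply part1; try nra.
    assert (q : sqrt (k^2+4) * sqrt (k^2+4) = k^2+4) by (apply sqrt_sqrt; nra).
    set (s := sqrt (k^2+4)) in *. set (m := INR n + 1).
    replace ((s*m)^2) with ((s*s)*(m^2)) by ring. rewrite q. ring.
Qed.
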